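(* Let $(S,\mathcal{E})$ be a qualitative evidence frame and let $\mathfrak{F}$ be a set of evidence allocation functions on $(S,\mathcal{E})$. Define $d:2^{\mathcal{E}}\to\tau_{\mathcal{E}}$ by $d(\emptyset)=S$ and, for $\mathbf{E}\neq\emptyset$, $d(\mathbf{E})=\min(\mathrm{dense}(\mathbf{E}),\subseteq)$, the least (w.r.t. inclusion) element of $\tau_{\mathbf{E}}$ that is dense in $\bigcup\mathbf{E}$ w.r.t. $\tau_{\mathbf{E}}$ (such a least element exists). Then $\mathfrak{F}\cup\{d\}$ is a set of evidence allocation functions on $(S,\mathcal{E})$.
   Context: A qualitative evidence frame is a pair $(S,\mathcal{E})$ where $S$ is a finite nonempty set and $\mathcal{E}$ is a nonempty family of subsets of $S$ with $\emptyset\notin\mathcal{E}$ and $S\notin\mathcal{E}$. For any family $\mathbf{E}\subseteq 2^S$, $\tau_{\mathbf{E}}$ denotes the topology on $S$ generated by $\mathbf{E}$ (as a subbasis): it consists of $\emptyset$, $S$, all finite intersections of members of $\mathbf{E}$, and all arbitrary unions of such finite intersections. For $\mathbf{E}\subseteq\mathcal{E}$, an element $D\in\tau_{\mathbf{E}}$ is called dense in $\bigcup\mathbf{E}$ w.r.t. $\tau_{\mathbf{E}}$ if $D\cap T\neq\emptyset$ for every nonempty $T\in\tau_{\mathbf{E}}$; $\mathrm{dense}(\mathbf{E})$ is the set of such elements. A set of evidence allocation functions on $(S,\mathcal{E})$ is a set $\mathfrak{F}$ of functions $2^{\mathcal{E}}\to\tau_{\mathcal{E}}$ such that for all $f,g\in\mathfrak{F}$: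 (1) $f(\emptyset)=S$; (2) for every nonempty $\mathbf{E}\subseteq\mathcal{E}$, either $f(\mathbf{E})=\emptyset$, or $f(\mathbf{E})\in\tau_{\mathbf{E}}$ and $f(\mathbf{E})$ is dense in $\bigcup\mathbf{E}$ w.r.t. $\tau_{\mathbf{E}}$; (3) for every $\mathbf{E}\subseteq\mathcal{E}$, $f(\mathbf{E})\subseteq g(\mathbf{E})$ or $g(\mathbf{E})\subseteq f(\mathbf{E})$. *)

(* Defs.v *)
From mathcomp Require Import all_boot.
Set Implicit Arguments. Unset Strict Implicit. Unset Printing Implicit Defensive.

Section QEF.
Variable S : finType.

Definition qe_frame (E : {set {set S}}) : Prop :=
  [/\ 0 < #|S|, E != set0, set0 \notin E & setT \notin E].

Definition fin_inters (F : {set {set S}}) : {set {set S}} :=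
  [set \bigcap_(A in G) A | G : {set {set S}} in powerset F & G != set0].

(* topology generated by F as a subbasis: set0, setT, finite intersections,
   and (arbitrary = finite, S being finite) unions of finite intersections *)
Definition tau (F : {set {set S}}) : {set {set S}} :=
  set0 |: (setT |: [set \bigcup_(B in H) B | H : {set {set S}} in powerset (fin_inters F)]).

Definition dense (F : {set {set S}}) : {set {set S}} :=
  [set D in tau F | [forall T in tau F, (T != set0) ==> (D :&: T != set0)]].

(* A set of evidence allocation functions on (S, E); functions 2^E -> tau E
   are modelled as total maps on {set {set S}}, constrained on subsets of E. *)
Definition eaf_set (E : {set {set S}})
    (Fs : ({set {set S}} -> {set S}) -> Prop) : Prop :=
  forall f g, Fs f -> Fs g ->
    [/\ (forall F : {set {set S}}, F \subset E -> f F \in tau E),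
        f set0 = setT,
        (forall F : {set {set S}}, F \subset E -> F != set0 ->
           f F = set0 \/ (f F \in tau F /\ f F \in dense F))
      & (forall F : {set {set S}}, F \subset E -> f F \subset g F \/ g F \subset f F)].

(* d(empty) = S; d(F) = the least element of dense(F) w.r.t. inclusion
   (setT is only a dummy default, never used once existence is shown). *)
Definition dmin (F : {set {set S}}) : {set S} :=
  if F == set0 then setT
  else odflt setT
    [pick D in dense F | [forall D', (D' \in dense F) ==> (D \subset D')]].

End QEF.

(* Main.v *)
Require Import Defs.
From mathcomp Require Import all_boot.
Set Implicit Arguments. Unset Strict Implicit.

Lemma fin_inters_mono (S : finType) (F E : {set {set S}}) :
  F \subset E -> fin_inters F \subset fin_inters E.
Proof.
move=> FE; apply/subsetP => Y /imsetP[G]; rewrite inE => /andP[GF G0] ->.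
apply/imsetP; exists G => //; rewrite inE G0 andbT.
by rewrite powersetE (subset_trans _ FE) // -powersetE.
Qed.

Lemma tau_mono (S : finType) (F E : {set {set S}}) :
  F \subset E -> tau F \subset tau E.
Proof.
move=> FE; apply/subsetP => X; rewrite /tau !in_setU1.
case/or3P=> [->|->|/imsetP[H HF ->]]; rewrite ?eqxx ?orbT //.
apply/orP; right; apply/orP; right; apply/imsetP; exists H => //.
rewrite powersetE (subset_trans _ (fin_inters_mono FE)) // -powersetE //.
Qed.

Lemma setT_tau (S : finType) (F : {set {set S}}) : setT \in tau F.
Proof. by rewrite /tau !in_setU1 eqxx orbT. Qed.

Lemma setT_dense (S : finType) (F : {set {set S}}) : setT \in dense F.
Proof.
rewrite inE setT_tau /=; apply/forallP => T; apply/implyP => _; apply/implyP.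
by rewrite setTI.
Qed.

Lemma dmin_dense (S : finType) (F : {set {set S}}) : F != set0 -> dmin F \in dense F.
Proof.
rewrite /dmin => /negbTE ->; case: pickP => [D /andP[DD _] | _] //=.
exact: setT_dense.
Qed.

Lemma dmin_tau (S : finType) (F E : {set {set S}}) : F \subset E -> dmin F \in tau E.
Proof.
move=> FE; case: (eqVneq F set0) => [->|F0].
  by rewrite /dmin eqxx setT_tau.
have := dmin_dense F0; rewrite inE => /andP[Ht _].
exact: (subsetP (tau_mono FE)).
Qed.

Lemma dmin_cmp (S : finType) (F : {set {set S}}) (g : {set {set S}} -> {set S}) :
  g set0 = setT -> (F != set0 -> g F = set0 \/ (g F \in tau F /\ g F \in dense F)) ->
  dmin F \subset g F \/ g F \subset dmin F.
Proof.
move=> g0 Hg; case: (eqVneq F set0) => [->|F0].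
  by rewrite /dmin eqxx g0; left.
case: (Hg F0) => [->|[_ Gd]]; first by right; apply: sub0set.
rewrite /dmin (negbTE F0); case: pickP => [D /andP[DD /forallP Hmin] | _] /=.
  by left; move/implyP: (Hmin (g F)); apply.
by right; apply: subsetT.
Qed.

Theorem proposition3 (S : finType) (E : {set {set S}})
    (Fs : ({set {set S}} -> {set S}) -> Prop) :
  qe_frame E -> eaf_set E Fs ->
  eaf_set E (fun h => Fs h \/ h = @dmin S).
Proof.
move=> _ H.
have key : forall h, Fs h \/ h = @dmin S ->
  [/\ (forall F : {set {set S}}, F \subset E -> h F \in tau E),
      h set0 = setT &
      (forall F : {set {set S}}, F \subset E -> F != set0 ->
           h F = set0 \/ (h F \in tau F /\ h F \in dense F))].
  move=> h [Hh|->].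
    by case: (H h h Hh Hh).
  split.
  - by move=> F FE; apply: dmin_tau.
  - by rewrite /dmin eqxx.
  - move=> F _ F0; right; have D := dmin_dense F0; split => //.
    by move: D; rewrite inE => /andP[].
move=> f g Hf Hg.
have [f1 f2 f3] := key f Hf; have [g1 g2 g3] := key g Hg.
split => // F FE.
case: Hf => [Hf|->]; case: Hg => [Hg|->].
- by case: (H f g Hf Hg) => _ _ _; apply.
- by case: (dmin_cmp f2 (f3 F FE)) => ?; [right|left].
- exact: dmin_cmp g2 (g3 F FE).
- by left.
Qed.
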